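(* Let $\Sigma$ be a non-degenerate (not necessarily complete) fan in $N=\mathbb{Z}^r$ and $Z=Z_\Sigma$ the associated toric variety, and let all notation be as in the context. Then $\beta\colon\mathbf{F}\to F$ is surjective, and there is an exact sequence \[ 0\to \operatorname{Pic}(Z)\to \hat M\xrightarrow{\hat P'}\hat E\to\hat K\to 0, \] where $\operatorname{Pic}(Z)$ is regarded as the subgroup $\ker(\pi)\subseteq K\cong\operatorname{Cl}(Z)$. Moreover, if $\alpha$ is surjective, then $\hat M$ is torsion-free and, under the identifications $\hat M\cong \hat N^*$ and $\hat E\cong\hat F^*$ induced by $\gamma^*$ and $\delta^*$, one has $\hat P'=\hat P^*$.
   Context: Non-degenerate means the primitive ray generators $v_1,\dots,v_n$ of $\Sigma$ generate $\mathbb{Q}^r$ as a convex cone. Let $F=\mathbb{Z}^n$ and $P\colon F\to N$, $e_i\mapsto v_i$. For each maximal cone $\sigma=\operatorname{cone}(v_{i_1},\dots,v_{i_{n_\sigma}})\in\Sigma_{\max}$ let $N_\sigma=\operatorname{lin}_{\mathbb{Q}}(\sigma)\cap N$, $F_\sigma=\mathbb{Z}^{n_\sigma}$, $P_\sigma\colon F_\sigma\to N_\sigma$, $e_j\mapsto v_{i_j}$, $\alpha_\sigma\colon N_\sigma\hookrightarrow N$ the inclusion and $\beta_\sigma\colon F_\sigma\to F$, $e_j\mapsto e_{i_j}$. Let $M=N^*$, $E=F^*$, $M_\sigma=N_\sigma^*$, $E_\sigma=F_\sigma^*$, $K=E/P^*(M)$, $K_\sigma=E_\sigma/P_\sigma^*(M_\sigma)$,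 and $\pi_\sigma\colon K\to K_\sigma$ the map induced by $\beta_\sigma^*$; one has $K\cong\operatorname{Cl}(Z)$, $K_\sigma\cong\operatorname{Cl}(U_\sigma)$ for the affine chart $U_\sigma$, and $\pi_\sigma$ corresponds to restriction of divisor classes. Put $\mathbf{N}=\bigoplus_{\sigma\in\Sigma_{\max}}N_\sigma$, $\mathbf{F}=\bigoplus_\sigma F_\sigma$, $\mathbf{P}=\bigoplus_\sigma P_\sigma\colon\mathbf{F}\to\mathbf{N}$, $\alpha\colon\mathbf{N}\to N$ given by $\alpha_\sigma$ on $N_\sigma$, $\beta\colon\mathbf{F}\to F$ given by $\beta_\sigma$ on $F_\sigma$. Let $\gamma\colon\hat N\to\mathbf{N}$ be a kernel of $\alpha$, $\delta\colon\hat F\to\mathbf{F}$ a kernel of $\beta$, and $\hat P\colon\hat F\to\hat N$ the induced map with $\gamma\circ\hat P=\mathbf{P}\circ\delta$. Let $\mathbf{M}=\mathbf{N}^*$, $\mathbf{E}=\mathbf{F}^*$, $\mathbf{K}=\bigoplus_\sigma K_\sigma$, $\pi\colon K\to\mathbf{K}$, $w\mapsto(\pi_\sigma(w))_\sigma$, $\hat M=\mathbf{M}/\alpha^*(M)$, $\hat E=\mathbf{E}/\beta^*(E)$, $\hat K=\mathbf{K}/\pi(K)$, and $\hat P'\colon\hat M\to\hat E$ the map induced by $\mathbf{P}^*$. *)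

(* Defs.v *)
From HB Require Import structures.
From mathcomp Require Import all_boot all_order all_algebra.
Set Implicit Arguments. Unset Strict Implicit. Unset Printing Implicit Defensive.
Import Order.TTheory GRing.Theory Num.Theory.
Local Open Scope ring_scope.

(* Abelian groups presented as "setoid subquotients": a carrier type,  *)
(* a membership predicate, an equality (the quotient relation), an     *)
(* addition and a zero.  All groups of the statement (duals, direct    *)
(* sums, quotients, kernels) are instances.                            *)
Record sgroup := SGroup {
  sg_car : Type;
  sg_in : sg_car -> Prop;
  sg_eq : sg_car -> sg_car -> Prop;
  sg_add : sg_car -> sg_car -> sg_car;
  sg_zero : sg_car }.
Arguments sg_in : clear implicits.
Arguments sg_eq : clear implicits.
Arguments sg_add : clear implicits.
Arguments sg_zero : clear implicits.

Definition sg_hom (A B : sgroup) (f : sg_car A -> sg_car B) : Prop :=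
  [/\ forall x, sg_in A x -> sg_in B (f x),
      forall x y, sg_in A x -> sg_in A y -> sg_eq A x y -> sg_eq B (f x) (f y) &
      forall x y, sg_in A x -> sg_in A y ->
        sg_eq B (f (sg_add A x y)) (sg_add B (f x) (f y))].

Definition sg_injective (A B : sgroup) (f : sg_car A -> sg_car B) : Prop :=
  forall x, sg_in A x -> sg_eq B (f x) (sg_zero B) -> sg_eq A x (sg_zero A).

Definition sg_surjective (A B : sgroup) (f : sg_car A -> sg_car B) : Prop :=
  forall y, sg_in B y -> exists2 x, sg_in A x & sg_eq B (f x) y.

Definition sg_exact (A B C : sgroup) (f : sg_car A -> sg_car B)
    (g : sg_car B -> sg_car C) : Prop :=
  forall y, sg_in B y ->
    (sg_eq C (g y) (sg_zero C) <-> exists2 x, sg_in A x & sg_eq B (f x) y).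

Definition sg_exact4 (A B C D : sgroup) (f : sg_car A -> sg_car B)
    (g : sg_car B -> sg_car C) (h : sg_car C -> sg_car D) : Prop :=
  [/\ sg_hom f, sg_hom g, sg_hom h & 
      [/\ sg_injective f, sg_exact f g, sg_exact g h & sg_surjective h]].

Definition sg_muln (A : sgroup) (x : sg_car A) (k : nat) : sg_car A :=
  iter k (sg_add A x) (sg_zero A).

Definition sg_torsion_free (A : sgroup) : Prop :=
  forall x k, sg_in A x -> (0 < k)%N ->
    sg_eq A (sg_muln x k) (sg_zero A) -> sg_eq A x (sg_zero A).

(* a function on 'rV_k which is additive on the subgroup A: an element *)
(* of Hom(A, Z) (values outside A are irrelevant)                       *)
Definition additive_on (T : Type) (addT : T -> T -> T) (A : T -> Prop)
    (f : T -> int) : Prop :=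
  forall x y, A x -> A y -> f (addT x y) = f x + f y.

Definition full {T : Type} (_ : T) : Prop := True.

Section Fan.
Variables (r n : nat) (v : 'I_n -> 'rV[int]_r).

Definition vQ (i : 'I_n) : 'rV[rat]_r := map_mx intr (v i).

Definition dotQ (u x : 'rV[rat]_r) : rat := \sum_j u 0 j * x 0 j.

Definition cone (S : {set 'I_n}) (x : 'rV[rat]_r) : Prop :=
  exists lam : 'I_n -> rat,
    [/\ forall i, 0 <= lam i, forall i, i \notin S -> lam i = 0 &
        x = \sum_i lam i *: vQ i].

Definition linQ (S : {set 'I_n}) (x : 'rV[rat]_r) : Prop :=
  exists lam : 'I_n -> rat,
    (forall i, i \notin S -> lam i = 0) /\ x = \sum_i lam i *: vQ i.

Definition strongly_convex (S : {set 'I_n}) : Prop :=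
  forall x, cone S x -> cone S (- x) -> x = 0.

Definition primitive (w : 'rV[int]_r) : Prop :=
  w != 0 /\ forall (k : int) (w' : 'rV[int]_r), w = k *: w' -> k = 1 \/ k = -1.

(* Sigma is a fan whose cones are cone(v_i : i in S), S in Sigma, and *)
(* whose rays have primitive generators exactly v_1, ..., v_n.         *)
Definition is_fan (Sigma : {set {set 'I_n}}) : Prop :=
  [/\
      forall S, S \in Sigma -> strongly_convex S,
      forall S u, S \in Sigma -> (forall x, cone S x -> 0 <= dotQ u x) ->
        exists2 T, T \in Sigma & forall x, cone T x <-> (cone S x /\ dotQ u x = 0),
      forall S T, S \in Sigma -> T \in Sigma ->
        (exists u, (forall x, cone S x -> 0 <= dotQ u x) /\
           forall x, (cone S x /\ cone T x) <-> (cone S x /\ dotQ u x = 0)) /\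
        (exists u, (forall x, cone T x -> 0 <= dotQ u x) /\
           forall x, (cone S x /\ cone T x) <-> (cone T x /\ dotQ u x = 0)),
      (* S lists exactly the rays contained in the cone *)
      forall S i, S \in Sigma -> cone S (vQ i) -> i \in S &
     [/\
      forall i, [set i] \in Sigma,
      forall i, primitive (v i) &
      injective v]].

Definition fan_nondegenerate : Prop := forall x : 'rV[rat]_r, cone setT x.

Variable Sigma : {set {set 'I_n}}.

(* maximal cones (for cones given by their rays, inclusion of cones is *)
(* inclusion of the ray sets)                                           *)
Definition Sigma_max : {set {set 'I_n}} :=
  [set S in Sigma | [forall T in Sigma, (S \subset T) ==> (S == T)]].

(* N = Z^r, F = Z^n, P : F -> N, e_i |-> v_i *)
Definition Pmap (y : 'rV[int]_n) : 'rV[int]_r := \sum_i y 0 i *: v i.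

Definition Nsig (S : {set 'I_n}) (x : 'rV[int]_r) : Prop := linQ S (map_mx intr x).

(* F_sigma = Z^{rays of sigma}, viewed inside F = Z^n via beta_sigma *)
Definition Fsig (S : {set 'I_n}) (y : 'rV[int]_n) : Prop :=
  forall i, i \notin S -> y 0 i = 0.

Definition addr_rV (k : nat) (x y : 'rV[int]_k) := x + y.

(* M = N^*, E = F^* *)
Definition formN := additive_on (@addr_rV r) full.
Definition formF := additive_on (@addr_rV n) full.

(* K = E / P^*(M) *)
Definition Kgrp : sgroup :=
  @SGroup ('rV[int]_n -> int) formF
    (fun e1 e2 => exists2 m, formN m & forall y, e1 y - e2 y = m (Pmap y))
    (fun e1 e2 y => e1 y + e2 y) (fun _ => 0).

(* bold K = (+)_sigma K_sigma, K_sigma = E_sigma / P_sigma^*(M_sigma) *)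
Definition bKgrp : sgroup :=
  @SGroup ({set 'I_n} -> 'rV[int]_n -> int)
    (fun e => forall S, S \in Sigma_max -> additive_on (@addr_rV n) (Fsig S) (e S))
    (fun e1 e2 => forall S, S \in Sigma_max ->
       exists2 m, additive_on (@addr_rV r) (Nsig S) m &
         forall y, Fsig S y -> e1 S y - e2 S y = m (Pmap y))
    (fun e1 e2 S y => e1 S y + e2 S y) (fun _ _ => 0).

(* pi : K -> bold K, restriction along the beta_sigma *)
Definition pi_map (e : 'rV[int]_n -> int) : {set 'I_n} -> 'rV[int]_n -> int :=
  fun _ => e.

Definition Picgrp : sgroup :=
  @SGroup ('rV[int]_n -> int)
    (fun e => sg_in Kgrp e /\ sg_eq bKgrp (pi_map e) (sg_zero bKgrp))
    (sg_eq Kgrp) (sg_add Kgrp) (sg_zero Kgrp).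

(* hat M = bold M / alpha^*(M) *)
Definition Mhat : sgroup :=
  @SGroup ({set 'I_n} -> 'rV[int]_r -> int)
    (fun x => forall S, S \in Sigma_max -> additive_on (@addr_rV r) (Nsig S) (x S))
    (fun x1 x2 => exists2 m, formN m &
       forall S, S \in Sigma_max -> forall u, Nsig S u -> x1 S u - x2 S u = m u)
    (fun x1 x2 S u => x1 S u + x2 S u) (fun _ _ => 0).

(* hat E = bold E / beta^*(E) *)
Definition Ehat : sgroup :=
  @SGroup ({set 'I_n} -> 'rV[int]_n -> int)
    (fun e => forall S, S \in Sigma_max -> additive_on (@addr_rV n) (Fsig S) (e S))
    (fun e1 e2 => exists2 e, formF e &
       forall S, S \in Sigma_max -> forall y, Fsig S y -> e1 S y - e2 S y = e y)
    (fun e1 e2 S y => e1 S y + e2 S y) (fun _ _ => 0).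

(* hat K = bold K / pi(K) *)
Definition Khat : sgroup :=
  @SGroup ({set 'I_n} -> 'rV[int]_n -> int)
    (fun e => forall S, S \in Sigma_max -> additive_on (@addr_rV n) (Fsig S) (e S))
    (fun e1 e2 => exists2 e, formF e &
       forall S, S \in Sigma_max ->
         exists2 m, additive_on (@addr_rV r) (Nsig S) m &
           forall y, Fsig S y -> e1 S y - e2 S y - e y = m (Pmap y))
    (fun e1 e2 S y => e1 S y + e2 S y) (fun _ _ => 0).

Definition Phat' (x : {set 'I_n} -> 'rV[int]_r -> int) :
    {set 'I_n} -> 'rV[int]_n -> int :=
  fun S y => x S (Pmap y).

Definition bN (x : {set 'I_n} -> 'rV[int]_r) : Prop :=
  forall S, (S \in Sigma_max -> Nsig S (x S)) /\ (S \notin Sigma_max -> x S = 0).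
Definition bF (y : {set 'I_n} -> 'rV[int]_n) : Prop :=
  forall S, (S \in Sigma_max -> Fsig S (y S)) /\ (S \notin Sigma_max -> y S = 0).
Definition alpha (x : {set 'I_n} -> 'rV[int]_r) : 'rV[int]_r :=
  \sum_(S in Sigma_max) x S.
Definition beta (y : {set 'I_n} -> 'rV[int]_n) : 'rV[int]_n :=
  \sum_(S in Sigma_max) y S.

Definition alpha_surjective : Prop :=
  forall z : 'rV[int]_r, exists2 x, bN x & alpha x = z.
Definition beta_surjective : Prop :=
  forall z : 'rV[int]_n, exists2 y, bF y & beta y = z.

(* hat N = ker alpha, hat F = ker beta (gamma, delta the inclusions) *)
Definition Nhat (x : {set 'I_n} -> 'rV[int]_r) : Prop := bN x /\ alpha x = 0.
Definition Fhat (y : {set 'I_n} -> 'rV[int]_n) : Prop := bF y /\ beta y = 0.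

Definition addfam (k : nat) (x y : {set 'I_n} -> 'rV[int]_k) :=
  fun S => x S + y S.

Definition NhatDual : sgroup :=
  @SGroup (({set 'I_n} -> 'rV[int]_r) -> int)
    (additive_on (@addfam r) Nhat)
    (fun f g => forall x, Nhat x -> f x = g x)
    (fun f g x => f x + g x) (fun _ => 0).
Definition FhatDual : sgroup :=
  @SGroup (({set 'I_n} -> 'rV[int]_n) -> int)
    (additive_on (@addfam n) Fhat)
    (fun f g => forall y, Fhat y -> f y = g y)
    (fun f g y => f y + g y) (fun _ => 0).

Definition gammaStar (x : {set 'I_n} -> 'rV[int]_r -> int) :
    ({set 'I_n} -> 'rV[int]_r) -> int :=
  fun y => \sum_(S in Sigma_max) x S (y S).
Definition deltaStar (e : {set 'I_n} -> 'rV[int]_n -> int) :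
    ({set 'I_n} -> 'rV[int]_n) -> int :=
  fun y => \sum_(S in Sigma_max) e S (y S).

Definition Phat (y : {set 'I_n} -> 'rV[int]_n) : {set 'I_n} -> 'rV[int]_r :=
  fun S => Pmap (y S).
Definition PhatStar (f : ({set 'I_n} -> 'rV[int]_r) -> int) :
    ({set 'I_n} -> 'rV[int]_n) -> int :=
  fun y => f (Phat y).

End Fan.

(* Main.v *)
Require Import Defs.
From HB Require Import structures.
From mathcomp Require Import all_boot all_order all_algebra ring.
From Stdlib Require Import ClassicalEpsilon FunctionalExtensionality.
Import Order.TTheory GRing.Theory Num.Theory.
Local Open Scope ring_scope.
Set Implicit Arguments. Unset Strict Implicit. Unset Printing Implicit Defensive.

Section Addon.
Variables (k : nat) (L : 'rV[int]_k -> Prop) (h : 'rV[int]_k -> int).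
Hypotheses (L0 : L 0) (LD : forall a b, L a -> L b -> L (a + b))
  (LN : forall a, L a -> L (- a)).
Hypothesis hA : additive_on (@addr_rV k) L h.

Lemma addon0 : h 0 = 0.
Proof. have := hA L0 L0; rewrite /addr_rV addr0 => E.
by apply: (@addrI _ (h 0)); rewrite addr0 -E. Qed.

Lemma addonN a : L a -> h (- a) = - h a.
Proof. move=> La; have := hA La (LN La); rewrite /addr_rV subrr addon0 => /eqP.
by rewrite eq_sym addr_eq0 => /eqP ->; rewrite opprK. Qed.

Lemma addonB a b : L a -> L b -> h (a - b) = h a - h b.
Proof. by move=> La Lb; rewrite (hA La (LN Lb)) addonN. Qed.

Lemma LMn a m : L a -> L (a *+ m).
Proof. by move=> La; elim: m => [|m IH]; rewrite ?mulr0n // mulrS; apply: LD. Qed.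

Lemma addonMn a m : L a -> h (a *+ m) = h a *+ m.
Proof.
move=> La; elim: m => [|m IH]; first by rewrite !mulr0n addon0.
by rewrite !mulrS (hA La (LMn m La)) IH.
Qed.

Lemma addon_sum (I : Type) (s : seq I) (P : pred I) (F : I -> 'rV[int]_k) :
  (forall i, P i -> L (F i)) ->
  h (\sum_(i <- s | P i) F i) = \sum_(i <- s | P i) h (F i).
Proof.
move=> HF.
suff [] : L (\sum_(i <- s | P i) F i) /\ h (\sum_(i <- s | P i) F i) = \sum_(i <- s | P i) h (F i) by [].
apply: (big_ind2 (fun a b => L a /\ h a = b)) => //.
  by split => //; apply: addon0.
  by move=> a b c d [La <-] [Lc <-]; split; [apply: LD| apply: hA].
by move=> i Pi; split => //; apply: HF.
Qed.
End Addon.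

Lemma full_closed k : [/\ @full 'rV[int]_k 0, (forall a b : 'rV[int]_k, full a -> full b -> full (a + b)) &
   (forall a : 'rV[int]_k, full a -> full (- a))].
Proof. by []. Qed.

Lemma choice' (A B : Type) (i : B) (P : A -> B -> Prop) :
  (forall a, exists b, P a b) -> exists f, forall a, P a (f a).
Proof. by move=> H; exists (fun a => epsilon (inhabits i) (P a)) => a; apply: epsilon_spec. Qed.

Lemma LZ k (L : 'rV[int]_k -> Prop) (L0 : L 0) (LD : forall a b, L a -> L b -> L (a + b))
  (LN : forall a, L a -> L (- a)) (c : int) a : L a -> L (c *: a).
Proof.
move=> La; rewrite -[c]intz scaler_int; case: c => m /=; first exact: LMn.
by apply: LN; apply: LMn.
Qed.

Section Hat.
Variables (n k : nat) (Smax : {set {set 'I_n}}) (L : {set 'I_n} -> 'rV[int]_k -> Prop).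
Hypotheses (L0 : forall S, L S 0) (LD : forall S a b, L S a -> L S b -> L S (a + b))
  (LN : forall S a, L S a -> L S (- a)).

Definition Hgrp : sgroup := @SGroup ({set 'I_n} -> 'rV[int]_k -> int)
    (fun x => forall S, S \in Smax -> additive_on (@addr_rV k) (L S) (x S))
    (fun x1 x2 => exists2 m, additive_on (@addr_rV k) full m &
       forall S, S \in Smax -> forall u, L S u -> x1 S u - x2 S u = m u)
    (fun x1 x2 S u => x1 S u + x2 S u) (fun _ _ => 0).

Definition bL (x : {set 'I_n} -> 'rV[int]_k) :=
  forall S, (S \in Smax -> L S (x S)) /\ (S \notin Smax -> x S = 0).
Definition hatL x := bL x /\ \sum_(S in Smax) x S = 0.
Definition Dgrp : sgroup := @SGroup (({set 'I_n} -> 'rV[int]_k) -> int)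
  (additive_on (@addfam n k) hatL) (fun f g => forall x, hatL x -> f x = g x)
  (fun f g x => f x + g x) (fun _ => 0).
Definition star (x : {set 'I_n} -> 'rV[int]_k -> int) (y : {set 'I_n} -> 'rV[int]_k) :=
  \sum_(S in Smax) x S (y S).

Lemma bL0 : bL (fun _ => 0).
Proof. by move=> S; split. Qed.
Lemma bLD x y : bL x -> bL y -> bL (fun S => x S + y S).
Proof.
move=> hx hy S; have [hx1 hx2] := hx S; have [hy1 hy2] := hy S; split.
  by move=> HS; apply: LD; [apply: hx1|apply: hy1].
by move=> HS; rewrite hx2 // hy2 // addr0.
Qed.
Lemma bLN x : bL x -> bL (fun S => - x S).
Proof.
move=> hx S; have [hx1 hx2] := hx S; split; first by move=> HS; apply: LN; apply: hx1.
by move=> HS; rewrite hx2 // oppr0.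
Qed.
Lemma bLd S u : S \in Smax -> L S u -> bL (fun T => if T == S then u else 0).
Proof.
move=> HS Lu T; case: eqP => [->|]; split => //.
by move=> /negP; rewrite HS.
Qed.
Lemma sum_d S (u : 'rV[int]_k) : S \in Smax -> \sum_(T in Smax) (if T == S then u else 0) = u.
Proof.
move=> HS; rewrite (bigD1 S) //= eqxx big1 ?addr0 //.
by move=> T /andP [_ /negbTE ->].
Qed.

Variable x : {set 'I_n} -> 'rV[int]_k -> int.
Hypothesis hx : forall S, S \in Smax -> additive_on (@addr_rV k) (L S) (x S).

Lemma star_add y y' : bL y -> bL y' -> star x (fun S => y S + y' S) = star x y + star x y'.
Proof.
move=> hy hy'; rewrite /star -big_split; apply: eq_bigr => S HS.
by apply: hx => //; [apply: (hy S).1|apply: (hy' S).1].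
Qed.
Lemma star_sub y y' : bL y -> bL y' -> star x (fun S => y S - y' S) = star x y - star x y'.
Proof.
move=> hy hy'; rewrite /star -sumrB; apply: eq_bigr => S HS.
by apply: (addonB (L0 S) (@LN S) (hx HS) ((hy S).1 HS) ((hy' S).1 HS)).
Qed.
Lemma star_d S u : S \in Smax -> L S u -> star x (fun T => if T == S then u else 0) = x S u.
Proof.
move=> HS Lu; rewrite /star (bigD1 S) //= eqxx big1 ?addr0 //.
move=> T /andP [HT /negbTE ->]; exact: (addon0 (L0 T) (hx HT)).
Qed.
End Hat.

Section HatT.
Variables (n k : nat) (Smax : {set {set 'I_n}}) (L : {set 'I_n} -> 'rV[int]_k -> Prop).
Hypotheses (L0 : forall S, L S 0) (LD : forall S a b, L S a -> L S b -> L S (a + b))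
  (LN : forall S a, L S a -> L S (- a)).

Local Notation H := (Hgrp Smax L).
Local Notation D := (Dgrp Smax L).
Local Notation bL := (bL Smax L).
Local Notation hatL := (hatL Smax L).
Local Notation star := (star Smax).

Lemma full_sum (m : 'rV[int]_k -> int) (I : Type) (s : seq I) (P : pred I) F :
  additive_on (@addr_rV k) full m ->
  m (\sum_(i <- s | P i) F i) = \sum_(i <- s | P i) m (F i).
Proof. by move=> hm; apply: (addon_sum (L := full)). Qed.

Lemma full0 (m : 'rV[int]_k -> int) : additive_on (@addr_rV k) full m -> m 0 = 0.
Proof. by move=> hm; apply: (addon0 (L := full)). Qed.

Lemma star_hom : sg_hom (A := H) (B := D) star.
Proof.
split.
- move=> x hx y y' [hy _] [hy' _]; exact: (star_add hx hy hy').
- move=> x1 x2 hx1 hx2 [m hm Hm] y [hy sy]; apply/eqP; rewrite -subr_eq0; apply/eqP.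
  rewrite /star -sumrB (eq_bigr (fun S => m (y S))); last first.
    by move=> S HS; apply: Hm => //; apply: (hy S).1.
  by rewrite -full_sum // sy full0.
- by move=> x1 x2 hx1 hx2 y hy; rewrite /star /= -big_split.
Qed.

Hypothesis surj : forall z, exists2 y, bL y & \sum_(S in Smax) y S = z.

Lemma pre_ex : exists pre : 'rV[int]_k -> {set 'I_n} -> 'rV[int]_k,
  forall z, bL (pre z) /\ \sum_(S in Smax) pre z S = z.
Proof.
apply: (@choice' _ _ (fun _ => 0) (fun z y => bL y /\ \sum_(S in Smax) y S = z)) => z; have [y hy sy] := surj z; by exists y.
Qed.

Lemma star_inj : sg_injective (A := H) (B := D) star.
Proof.
move=> x hx H0 /=; have [pre Hpre] := pre_ex.
pose m z := star x (pre z).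
have Key : forall y, bL y -> star x y = m (\sum_(S in Smax) y S).
  move=> y hy; set z := \sum_(S in Smax) y S; have [hp sp] := Hpre z.
  apply/eqP; rewrite -subr_eq0 -(star_sub L0 LN hx hy hp); apply/eqP; apply: H0.
  split; first by apply: bLD => //; apply: bLN.
  by rewrite sumrB sp subrr.
exists m.
  move=> a b _ _; have [ha sa] := Hpre a; have [hb sb] := Hpre b.
  rewrite /addr_rV.
  have -> : a + b = \sum_(S in Smax) (pre a S + pre b S) by rewrite big_split /= sa sb.
  rewrite -Key; last exact: (bLD LD ha hb).
  exact: (star_add hx ha hb).
move=> S HS u Lu; rewrite subr0 -(star_d L0 hx HS Lu) Key; last exact: bLd.
by rewrite sum_d.
Qed.

Lemma bLZ y (c : int) : bL y -> bL (fun S => c *: y S).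
Proof.
move=> hy S; have [h1 h2] := hy S; split.
  by move=> HS; apply: (LZ (L0 S) (@LD S) (@LN S)); apply: h1.
by move=> HS; rewrite h2 // scaler0.
Qed.

Lemma bL_sum (I : Type) (s : seq I) (P : pred I) (F : I -> {set 'I_n} -> 'rV[int]_k) :
  (forall i, P i -> bL (F i)) -> bL (fun S => \sum_(i <- s | P i) F i S).
Proof.
move=> HF; elim: s => [|i s IH].
  by move=> S; split => _; rewrite big_nil.
move=> S; rewrite big_cons; case: ifP => Pi; last exact: IH.
by apply: (bLD LD (HF i Pi) IH).
Qed.

Lemma fam_big (I : Type) (s : seq I) (P : pred I) (F : I -> {set 'I_n} -> 'rV[int]_k) T :
  (\big[@addfam n k/(fun _ => 0)]_(i <- s | P i) F i) T = \sum_(i <- s | P i) F i T.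
Proof.
elim: s => [|i s IH]; first by rewrite !big_nil.
by rewrite !big_cons; case: ifP => _ //; rewrite /addfam IH.
Qed.

Lemma star_surj : sg_surjective (A := H) (B := D) star.
Proof.
move=> f hf /=; have [pre Hpre] := pre_ex.
pose s (z : 'rV[int]_k) T := \sum_(j < k) z 0 j *: pre (delta_mx 0 j) T.
have bs : forall z, bL (s z).
  by move=> z; apply: bL_sum => j _; apply: bLZ; exact: (Hpre _).1.
have ss : forall z, \sum_(T in Smax) s z T = z.
  move=> z; rewrite /s exchange_big /= [RHS]row_sum_delta; apply: eq_bigr => j _.
  by rewrite -scaler_sumr (Hpre _).2.
have sD : forall a b T, s (a + b) T = s a T + s b T.
  by move=> a b T; rewrite /s -big_split; apply: eq_bigr => j _; rewrite mxE scalerDl.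
have sS : forall (I : Type) (r : seq I) (P : pred I) F T,
    s (\sum_(i <- r | P i) F i) T = \sum_(i <- r | P i) s (F i) T.
  move=> I r P F T; rewrite /s exchange_big; apply: eq_bigr => j _.
  by rewrite summxE scaler_suml.
pose fam S u T := (if T == S then u else 0) - s u T.
have hfam : forall S u, S \in Smax -> L S u -> hatL (fam S u).
  move=> S u HS Lu; split.
    by apply: (bLD LD (bLd L0 HS Lu)); apply: bLN.
  by rewrite /fam sumrB sum_d // ss subrr.
have f0 : f (fun _ => 0) = 0.
  have h0 : hatL (fun _ => 0) by split; [exact: bL0| rewrite big1].
  have := hf _ _ h0 h0; rewrite /addfam.
  have -> : (fun S : {set 'I_n} => (0 : 'rV[int]_k) + 0) = (fun _ => 0).
    by apply: functional_extensionality => S; rewrite addr0.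
  by move=> E; apply: (@addrI _ (f (fun _ => 0))); rewrite addr0 -E.
exists (fun S u => f (fam S u)).
  move=> S HS u u' Lu Lu'; rewrite /addr_rV -hf; try exact: hfam.
  congr f; apply: functional_extensionality => T; rewrite /addfam /fam sD.
  by rewrite opprD; case: (T == S); [rewrite addrACA | rewrite !add0r].
move=> y [hy sy].
have [hB fB] : hatL (\big[@addfam n k/(fun _ => 0)]_(S in Smax) fam S (y S)) /\
   f (\big[@addfam n k/(fun _ => 0)]_(S in Smax) fam S (y S)) =
   \sum_(S in Smax) f (fam S (y S)).
  apply: (big_ind2 (fun a b => hatL a /\ f a = b)).
  - by split => //; split; [exact: bL0 | rewrite big1].
  - move=> a b c d [ha <-] [hc <-]; split; last exact: hf.
    split; first exact: (bLD LD ha.1 hc.1).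
    by rewrite big_split /= ha.2 hc.2 addr0.
  - by move=> S HS; split => //; apply: hfam => //; apply: (hy S).1.
rewrite /star -fB; congr f; apply: functional_extensionality => T.
rewrite fam_big /fam sumrB -sS sy.
have -> : s 0 T = 0 by rewrite /s big1 // => j _; rewrite mxE scale0r.
rewrite subr0; case: (boolP (T \in Smax)) => HT.
  rewrite (bigD1 T) //= eqxx big1 ?addr0 // => S /andP [_ /negbTE].
  by rewrite eq_sym => ->.
rewrite big1; first by rewrite (hy T).2.
by move=> S HS; case: eqP => // E; move: HT; rewrite E HS.
Qed.

Lemma muln_eval (x : sg_car H) j S u : sg_muln (A := H) x j S u = x S u *+ j.
Proof. by elim: j => [|j IH] /=; [rewrite mulr0n | rewrite IH mulrS]. Qed.

Lemma H_tf : sg_torsion_free H.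
Proof.
move=> x kk hx kk0 [m hm Hm] /=; have [pre Hpre] := pre_ex.
have Hm' : forall S, S \in Smax -> forall u, L S u -> m u = x S u *+ kk.
  by move=> S HS u Lu; rewrite -(Hm S HS u Lu) /= subr0 muln_eval.
pose m' z := star x (pre z).
have mm : forall z, m z = m' z *+ kk.
  move=> z; rewrite -{1}(Hpre z).2 full_sum // /m' /star -sumrMnl.
  by apply: eq_bigr => S HS; apply: Hm' => //; apply: ((Hpre z).1 S).1.
have canc : forall a b : int, a *+ kk = b *+ kk -> a = b.
  by move=> a b E; apply/eqP; rewrite -(eqr_pMn2r kk0) E.
exists m'.
  move=> a b _ _; apply: canc; rewrite mulrnDl -!mm; exact: hm.
move=> S HS u Lu; apply: canc; by rewrite subr0 -mm (Hm' S HS u Lu).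
Qed.
End HatT.
Set Implicit Arguments. Unset Strict Implicit. Unset Printing Implicit Defensive.

Lemma addonMz k (L : 'rV[int]_k -> Prop) (h : 'rV[int]_k -> int) :
  L 0 -> (forall a b, L a -> L b -> L (a + b)) -> (forall a, L a -> L (- a)) ->
  additive_on (@addr_rV k) L h -> forall a c, L a -> h (c *: a) = c * h a.
Proof.
move=> L0 LD LN hA a c La; rewrite -[c in LHS]intz scaler_int [RHS]mulrC -mulrzz.
case: c => m /=; first by rewrite (addonMn L0 LD hA).
by rewrite (addonN L0 LN hA) ?(addonMn L0 LD hA) //; apply: LMn.
Qed.

Lemma full_delta k (g : 'rV[int]_k -> int) y : additive_on (@addr_rV k) full g ->
  g y = \sum_i y 0 i * g (delta_mx 0 i).
Proof.
move=> hg; rewrite {1}(row_sum_delta y) (full_sum (m:=g)) //; apply: eq_bigr => i _.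
by apply: (addonMz (L := full)).
Qed.

Lemma full_ext k (g g' : 'rV[int]_k -> int) :
  additive_on (@addr_rV k) full g -> additive_on (@addr_rV k) full g' ->
  (forall i, g (delta_mx 0 i) = g' (delta_mx 0 i)) -> forall y, g y = g' y.
Proof.
move=> hg hg' E y; rewrite (full_delta y hg) (full_delta y hg').
by apply: eq_bigr => i _; rewrite E.
Qed.

Section Spec.
Variables (r n : nat) (v : 'I_n -> 'rV[int]_r) (Sigma : {set {set 'I_n}}).

Lemma PmapD a b : Pmap v (a + b) = Pmap v a + Pmap v b.
Proof. by rewrite /Pmap -big_split; apply: eq_bigr => i _; rewrite mxE scalerDl. Qed.

Lemma formF_comp m : additive_on (@addr_rV r) full m ->
  additive_on (@addr_rV n) full (fun y => m (Pmap v y)).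
Proof. by move=> hm a b _ _; rewrite /addr_rV PmapD; apply: hm. Qed.

Lemma mapPmap y : map_mx intr (Pmap v y) = \sum_i (y 0 i)%:~R *: vQ v i.
Proof.
apply/rowP => j; rewrite !mxE summxE rmorph_sum summxE; apply: eq_bigr => i _.
by rewrite !mxE rmorphM.
Qed.

Lemma Nsig_P S y : Fsig S y -> Nsig v S (Pmap v y).
Proof.
move=> hy; exists (fun i => (y 0 i)%:~R); split; last exact: mapPmap.
by move=> i /hy ->.
Qed.

Lemma Nsig0 S : Nsig v S 0.
Proof.
exists (fun _ => 0); split => //; rewrite big1 => [|i _]; last by rewrite scale0r.
by apply/rowP => j; rewrite !mxE.
Qed.

Lemma NsigD S a b : Nsig v S a -> Nsig v S b -> Nsig v S (a + b).
Proof.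
move=> [l [hl E1]] [l' [hl' E]]; exists (fun i => l i + l' i); split.
  by move=> i iS; rewrite hl // hl' // addr0.
have -> : map_mx intr (a + b) = map_mx intr a + map_mx intr b :> 'rV[rat]_r.
  by apply/rowP => j; rewrite !mxE rmorphD.
by rewrite E E1 -big_split; apply: eq_bigr => i _; rewrite scalerDl.
Qed.

Lemma NsigN S a : Nsig v S a -> Nsig v S (- a).
Proof.
move=> [l [hl E1]]; exists (fun i => - l i); split.
  by move=> i iS; rewrite hl // oppr0.
have -> : map_mx intr (- a) = - map_mx intr a :> 'rV[rat]_r.
  by apply/rowP => j; rewrite !mxE rmorphN.
by rewrite E1 -sumrN; apply: eq_bigr => i _; rewrite scaleNr.
Qed.

Lemma Nsig_mult S u : Nsig v S u ->
  exists D : int, D != 0 /\ exists2 y, Fsig S y & Pmap v y = D *: u.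
Proof.
move=> [l [hl E]].
pose D : int := \prod_i denq (l i).
have D0 : 0 < D by apply: prodr_gt0 => i _; apply: denq_gt0.
pose y : 'rV[int]_n := \row_i ((\prod_(j | j != i) denq (l j)) * numq (l i)).
have hy : forall i, (y 0 i)%:~R = D%:~R * l i :> rat.
  move=> i; rewrite mxE /D [in RHS](bigD1 i) //= !intrM numqE; ring.
exists D; split; first by rewrite gt_eqF.
exists y.
  by move=> i iS; rewrite mxE hl // mulr0.
have EQ : map_mx intr (Pmap v y) = map_mx intr (D *: u) :> 'rV[rat]_r.
  rewrite mapPmap (eq_bigr (fun i => D%:~R *: (l i *: vQ v i))); last first.
    by move=> i _; rewrite hy scalerA.
  rewrite -scaler_sumr -E; apply/rowP => j; rewrite !mxE intrM.
  done.
apply/rowP => j; have := congr1 (fun M : 'rV[rat]_r => M 0 j) EQ.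
by rewrite !mxE => /intr_inj.
Qed.

Lemma zero_on S (h : 'rV[int]_r -> int) : additive_on (@addr_rV r) (Nsig v S) h ->
  (forall y, Fsig S y -> h (Pmap v y) = 0) -> forall u, Nsig v S u -> h u = 0.
Proof.
move=> hA H0 u Nu; have [D [D0 [y Fy E]]] := Nsig_mult Nu.
have := H0 y Fy; rewrite E (addonMz (@Nsig0 S) (@NsigD S) (@NsigN S) hA) //.
by move/eqP; rewrite mulf_eq0 (negbTE D0) /= => /eqP.
Qed.

Lemma ex_max i : is_fan v Sigma -> exists2 S, S \in Sigma_max Sigma & i \in S.
Proof.
move=> [_ _ _ _ [Hi _ _]].
have P0 : (fun T => (T \in Sigma) && ([set i] \subset T)) [set i] by rewrite /= Hi subxx.
case: (@arg_maxnP _ [set i] (fun T => (T \in Sigma) && ([set i] \subset T)) (fun T : {set 'I_n} => #|T|) P0) => T /andP [TS iT] Tmax.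
exists T; last by rewrite -sub1set.
rewrite inE TS /=; apply/forall_inP => T' T'S; apply/implyP => sub.
rewrite -(geq_leqif (subset_leqif_cards sub)); apply: Tmax.
by rewrite T'S (subset_trans iT sub).
Qed.

Lemma beta_surj : is_fan v Sigma -> beta_surjective Sigma.
Proof.
move=> hf z.
have [c Hc] : exists c : 'I_n -> {set 'I_n}, forall i, c i \in Sigma_max Sigma /\ i \in c i.
  apply: (@choice' _ _ set0 (fun i S => S \in Sigma_max Sigma /\ i \in S)) => i.
  by have [S ? ?] := ex_max i hf; exists S.
exists (fun S => \row_j (if S == c j then z 0 j else 0)).
  move=> S; split.
    move=> HS i iS; rewrite mxE; case: eqP => // E; move: iS; rewrite E (Hc i).2.
    done.
  move=> HS; apply/rowP => j; rewrite !mxE; case: eqP => // E; move: HS.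
  by rewrite E (Hc j).1.
apply/rowP => j; rewrite /beta summxE (bigD1 (c j)) ?(Hc j).1 //= mxE eqxx big1 ?addr0 //.
by move=> S /andP [_ /negbTE]; rewrite mxE => ->.
Qed.
End Spec.
Unset Implicit Arguments. Set Strict Implicit.

Lemma Fsig0 n S : @Fsig n S 0.
Proof. by move=> i _; rewrite mxE. Qed.
Lemma FsigD n S a b : @Fsig n S a -> Fsig S b -> Fsig S (a + b).
Proof. by move=> ha hb i iS; rewrite mxE ha ?hb ?addr0. Qed.
Lemma FsigN n S a : @Fsig n S a -> Fsig S (- a).
Proof. by move=> ha i iS; rewrite mxE ha ?oppr0. Qed.
Lemma add0_on k (L : 'rV[int]_k -> Prop) : additive_on (@addr_rV k) L (fun _ => 0).
Proof. by move=> a b _ _; rewrite addr0. Qed.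

Theorem proposition2p3 (r n : nat) (v : 'I_n -> 'rV[int]_r)
    (Sigma : {set {set 'I_n}}) :
  is_fan v Sigma -> fan_nondegenerate v ->
  [/\ beta_surjective Sigma,
      exists (f : sg_car (Picgrp v Sigma) -> sg_car (Mhat v Sigma))
             (g : sg_car (Ehat Sigma) -> sg_car (Khat v Sigma)),
        @sg_exact4 (Picgrp v Sigma) (Mhat v Sigma) (Ehat Sigma) (Khat v Sigma)
          f (@Phat' r n v) g &
      alpha_surjective v Sigma ->
        [/\ sg_torsion_free (Mhat v Sigma),
            sg_hom (A := Mhat v Sigma) (B := NhatDual v Sigma) (gammaStar Sigma),
            sg_injective (A := Mhat v Sigma) (B := NhatDual v Sigma) (gammaStar Sigma),
            sg_surjective (A := Mhat v Sigma) (B := NhatDual v Sigma) (gammaStar Sigma) &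
           [/\ sg_hom (A := Ehat Sigma) (B := FhatDual Sigma) (deltaStar Sigma),
            sg_injective (A := Ehat Sigma) (B := FhatDual Sigma) (deltaStar Sigma),
            sg_surjective (A := Ehat Sigma) (B := FhatDual Sigma) (deltaStar Sigma) &
            forall x, sg_in (Mhat v Sigma) x ->
              sg_eq (FhatDual Sigma) (deltaStar Sigma (Phat' v x))
                    (PhatStar v (gammaStar Sigma x))]]].
Proof.
move=> hfan _.
have bsurj := beta_surj hfan.
split => //; last first.
  move=> asurj.
  have N0 := @Nsig0 r n v; have ND := @NsigD r n v; have NN := @NsigN r n v.
  have F0 := @Fsig0 n; have FD := @FsigD n; have FN := @FsigN n.
  split.
  - exact: (H_tf (L := Nsig v) asurj).
  - exact: (star_hom (Sigma_max Sigma) (Nsig v)).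
  - exact: (star_inj (L := Nsig v) N0 ND NN asurj).
  - exact: (star_surj (L := Nsig v) N0 ND NN asurj).
  split.
  - exact: (star_hom (Sigma_max Sigma) (@Fsig n)).
  - exact: (star_inj (L := @Fsig n) F0 FD FN bsurj).
  - exact: (star_surj (L := @Fsig n) F0 FD FN bsurj).
  - by [].
pose Spec (p : 'rV[int]_n -> int) (S : {set 'I_n}) (m : 'rV[int]_r -> int) :=
  additive_on (@addr_rV r) (Nsig v S) m /\ forall y, Fsig S y -> p y - 0 = m (Pmap v y).
pose f (p : 'rV[int]_n -> int) S := epsilon (inhabits (fun _ : 'rV[int]_r => (0:int))) (Spec p S).
have spec : forall p, sg_in (Picgrp v Sigma) p -> forall S, S \in Sigma_max Sigma -> Spec p S (f p S).
  move=> p [hp Hp] S HS; apply: epsilon_spec; have [m hm Hm] := Hp S HS; by exists m.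
have N0 := @Nsig0 r n v; have ND := @NsigD r n v; have NN := @NsigN r n v.
have picD : forall p1 p2, sg_in (Picgrp v Sigma) p1 -> sg_in (Picgrp v Sigma) p2 ->
    sg_in (Picgrp v Sigma) (sg_add (Picgrp v Sigma) p1 p2).
  move=> p1 p2 h1 h2; split.
    by move=> a b _ _; rewrite /= (h1.1 a b I I) (h2.1 a b I I) addrACA.
  move=> S HS; exists (fun u => f p1 S u + f p2 S u).
    move=> a b Na Nb; rewrite ((spec _ h1 S HS).1 a b Na Nb) ((spec _ h2 S HS).1 a b Na Nb).
    by rewrite addrACA.
  move=> y Fy; rewrite /= -((spec _ h1 S HS).2 y Fy) -((spec _ h2 S HS).2 y Fy) !subr0 //.
exists f, (fun e => e).
split.
- split.
  + by move=> p hp S HS; exact: (spec p hp S HS).1.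
  + move=> p1 p2 h1 h2 [m hm Hm]; exists m => // S HS u Nu.
    apply/eqP; rewrite -subr_eq0; apply/eqP.
    apply: (zero_on (v := v) (S := S) (h := fun u => f p1 S u - f p2 S u - m u)) => //.
      move=> a b Na Nb; rewrite /= ((spec _ h1 S HS).1 a b Na Nb) ((spec _ h2 S HS).1 a b Na Nb).
      rewrite (hm a b I I); ring.
    move=> y Fy; rewrite -((spec _ h1 S HS).2 y Fy) -((spec _ h2 S HS).2 y Fy) -Hm; ring.
  + move=> p1 p2 h1 h2; exists (fun _ => 0); first exact: add0_on.
    move=> S HS u Nu.
    apply: (zero_on (v := v) (S := S) (h := fun u => f (sg_add (Picgrp v Sigma) p1 p2) S u - (f p1 S u + f p2 S u))) => //.
      move=> a b Na Nb; rewrite /= ((spec _ (picD _ _ h1 h2) S HS).1 a b Na Nb).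
      rewrite ((spec _ h1 S HS).1 a b Na Nb) ((spec _ h2 S HS).1 a b Na Nb); ring.
    move=> y Fy; rewrite -((spec _ (picD _ _ h1 h2) S HS).2 y Fy).
    rewrite -((spec _ h1 S HS).2 y Fy) -((spec _ h2 S HS).2 y Fy) /=; ring.
- split.
  + move=> x hx S HS a b Fa Fb; rewrite /Phat' /addr_rV PmapD.
    by apply: hx => //; apply: Nsig_P.
  + move=> x1 x2 _ _ [m hm Hm]; exists (fun y => m (Pmap v y)); first exact: formF_comp.
    by move=> S HS y Fy; apply: Hm => //; apply: Nsig_P.
  + move=> x1 x2 _ _; exists (fun _ => 0); first exact: add0_on.
    by move=> S HS y Fy; rewrite subrr.
- split.
  + by [].
  + move=> y1 y2 _ _ [e he He]; exists e => // S HS; exists (fun _ => 0); first exact: add0_on.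
    by move=> y Fy; rewrite He // subrr.
  + move=> y1 y2 _ _; exists (fun _ => 0); first exact: add0_on.
    move=> S HS; exists (fun _ => 0); first exact: add0_on.
    by move=> y Fy; rewrite /= subrr subr0.
split.
- move=> p hp [m0 hm0 Hm0]; exists m0 => // y; rewrite subr0.
  apply: (@full_ext n p (fun y => m0 (Pmap v y)) hp.1 (@formF_comp r n v m0 hm0)) => i.
  have [S HS iS] := ex_max i hfan.
  have Fd : Fsig S (delta_mx 0 i : 'rV[int]_n).
    by move=> j jS; rewrite mxE eqxx /=; case: eqP => // E; move: jS; rewrite E iS.
  rewrite -[LHS]subr0 ((spec p hp S HS).2 _ Fd) -(Hm0 S HS _ (Nsig_P v Fd)) /= subr0 //.
- move=> x hx; split.
  + move=> [e he He]; exists e.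
      split => // S HS; exists (x S) => [|y Fy]; first exact: hx.
      by rewrite /pi_map /=; have := He S HS y Fy; rewrite /Phat' /= !subr0 => ->.
    have he' : sg_in (Picgrp v Sigma) e.
      split => // S HS; exists (x S) => [|y Fy]; first exact: hx.
      by rewrite /pi_map /=; have := He S HS y Fy; rewrite /Phat' /= !subr0 => ->.
    exists (fun _ => 0); first exact: add0_on.
    move=> S HS u Nu.
    apply: (zero_on (v := v) (S := S) (h := fun u => f e S u - x S u)) => //.
      move=> a b Na Nb; rewrite /= ((spec _ he' S HS).1 a b Na Nb) (hx S HS a b Na Nb); ring.
    move=> y Fy; rewrite -((spec _ he' S HS).2 y Fy).
    have := He S HS y Fy; rewrite /Phat' /= subr0 => ->; ring.
  + move=> [p hp [m0 hm0 Hm0]]; exists (fun y => p y - m0 (Pmap v y)).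
      move=> a b _ _; rewrite /= (hp.1 a b I I) (@formF_comp r n v m0 hm0 a b I I); ring.
    move=> S HS y Fy; have := Hm0 S HS _ (Nsig_P v Fy).
    rewrite -((spec _ hp S HS).2 y Fy) /Phat' /= => E.
    have -> : x S (Pmap v y) = p y - 0 - m0 (Pmap v y) by rewrite -E; ring.
    ring.
- move=> y hy; split.
  + move=> [e he He].
    have [mm Hmm] : exists mm : {set 'I_n} -> 'rV[int]_r -> int, forall S, S \in Sigma_max Sigma ->
        additive_on (@addr_rV r) (Nsig v S) (mm S) /\
        forall z, Fsig S z -> y S z - 0 - e z = mm S (Pmap v z).
      apply: (@choice' _ _ (fun _ => 0) (fun S m => S \in Sigma_max Sigma ->
        additive_on (@addr_rV r) (Nsig v S) m /\
        forall z, Fsig S z -> y S z - 0 - e z = m (Pmap v z))) => S.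
      case: (boolP (S \in Sigma_max Sigma)) => HS; last by exists (fun _ => 0).
      by have [m hm Hm] := He S HS; exists m.
    exists mm; first by move=> S HS; exact: (Hmm S HS).1.
    exists (fun z => - e z).
      by move=> a b _ _; rewrite (he a b I I) opprD.
    move=> S HS z Fz; rewrite /Phat' -((Hmm S HS).2 z Fz); ring.
  + move=> [x hx [e he He]]; exists (fun z => - e z).
      by move=> a b _ _; rewrite (he a b I I) opprD.
    move=> S HS; exists (x S); first exact: hx.
    move=> z Fz; have := He S HS z Fz; rewrite /Phat' => E.
    have -> : x S (Pmap v z) = e z + y S z by rewrite -E; ring.
    ring.
- move=> y hy; exists y => //; exists (fun _ => 0); first exact: add0_on.
  move=> S HS; exists (fun _ => 0); first exact: add0_on.
  by move=> z Fz; rewrite /= subrr subr0.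
Qed.
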